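(* Let $B\ge 1$, $S\ge 1$, $r,\lambda_{BB},\lambda_{SS},\lambda_{BS}>0$, and let $V(k_b,k_s)$, for $k_b\in\{0,\dots,B\}$ and $k_s\in\{1,\dots,S\}$, be defined by the recursion in the context. Then for all $k_b\in\{0,\dots,B-1\}$ and $k_s\in\{1,\dots,S\}$, $$V(k_b,k_s)-V(k_b+1,k_s)\le V(0,1)-V(1,1).$$
   Context: For $k_b\in\{0,\dots,B\}$ and $k_s\in\{1,\dots,S\}$, set $V(B,k_s)=0$, and for $k_b\le B-1$ define recursively $$V(k_b,k_s)=\frac{\lambda_{BB}k_b(B-k_b)V(k_b+1,k_s)+\lambda_{SS}(k_s-1)(S-k_s)V(k_b,k_s+1)+\lambda_{BS}k_b(S-k_s)V(k_b,k_s+1)+\lambda_{BS}k_s(B-k_b)V(k_b+1,k_s)+\lambda_{BS}(B-k_b)}{r+\lambda_{BB}k_b(B-k_b)+\lambda_{SS}(k_s-1)(S-k_s)+\lambda_{BS}k_b(S-k_s)+\lambda_{BS}k_s(B-k_b)}$$ (terms with coefficient $S-k_s=0$ are absent when $k_s=S$). Interpretation: in a market with $B$ buyers and $S$ sellers where each buyer–seller pair meets at Poisson rate $\lambda_{BS}$, each buyer pair at rate $\lambda_{BB}$, each seller pair at rate $\lambda_{SS}$ (independently), and information that a fixed seller $s$ is guilty spreads whenever an informed player meets an uninformed one (with $s$ herself counted among the $k_s$ informed sellers, and $s$'s own meetings with other sellers not spreading it), $V(k_b,k_s)$ is the expected discounted ($e^{-rt}$) number of meetings of $s$ with buyers who are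 not yet informed, starting from $k_b$ informed buyers and $k_s$ informed sellers. *)

(* Defs.v *)
From mathcomp Require Import all_boot all_order all_algebra.
Set Implicit Arguments. Unset Strict Implicit. Unset Printing Implicit Defensive.
Import Order.TTheory GRing.Theory Num.Theory.
Local Open Scope ring_scope.

(* Values outside the domain are irrelevant:
   when ks = S, the terms involving V(kb, S+1) carry the coefficient
   (S - ks) = 0, i.e. they are absent, as in the paper. *)
Definition V_rec (R : realFieldType) (B S : nat) (r lBB lSS lBS : R)
    (V : nat -> nat -> R) : Prop :=
  (forall ks, (1 <= ks <= S)%N -> V B ks = 0) /\
  (forall kb ks, (kb < B)%N -> (1 <= ks <= S)%N ->
     V kb ks =
       (lBB * kb%:R * (B - kb)%:R * V kb.+1 ks
        + lSS * (ks - 1)%:R * (S - ks)%:R * V kb ks.+1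
        + lBS * kb%:R * (S - ks)%:R * V kb ks.+1
        + lBS * ks%:R * (B - kb)%:R * V kb.+1 ks
        + lBS * (B - kb)%:R)
       / (r + lBB * kb%:R * (B - kb)%:R
          + lSS * (ks - 1)%:R * (S - ks)%:R
          + lBS * kb%:R * (S - ks)%:R
          + lBS * ks%:R * (B - kb)%:R)).

(* Main.v *)
Require Import Defs.
From mathcomp Require Import all_boot all_order all_algebra.
From mathcomp Require Import lra ring zify.
Import Order.TTheory GRing.Theory Num.Theory.
Set Implicit Arguments. Unset Strict Implicit.
Local Open Scope ring_scope.
Section Abs.
Variables (R : realFieldType) (r lBB lSS lBS b s : R).
Definition Aa (x y : R) := (b - x) * (lBB * x + lBS * y).
Definition Cc (x y : R) := (s - y) * (lSS * (y - 1) + lBS * x).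
Definition Ff (x : R) := lBS * (b - x).
Definition Eqn (x y v vb vs : R) :=
  (r + Aa x y + Cc x y) * v = Aa x y * vb + Cc x y * vs + Ff x.

Lemma stepD x y v00 v10 v01 v20 v11 :
  0 <= lBS ->
  Eqn x y v00 v10 v01 -> Eqn (x+1) y v10 v20 v11 ->
  0 <= Aa (x+1) y * (v10 - v20) -> 0 <= lBS*(s-y)*(v10 - v11) ->
  0 <= Cc x y * (v01 - v11) ->
  0 <= (r + Aa x y + Cc x y) * (v00 - v10).
Proof. rewrite /Eqn /Aa /Cc /Ff => *; lra. Qed.

Lemma stepE x y v00 v10 v01 v11 v02 :
  Eqn x y v00 v10 v01 -> Eqn x (y+1) v01 v11 v02 ->
  0 <= lBS*(b-x)*(v01 - v11) -> 0 <= Cc x (y+1) * (v01 - v02) ->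
  0 <= Aa x y * (v10 - v11) ->
  0 <= (r + Aa x y + Cc x y) * (v00 - v01).
Proof. rewrite /Eqn /Aa /Cc /Ff => *; lra. Qed.

Lemma stepX x y v00 v10 v01 v11 v20 v21 v02 v12 :
  Eqn x y v00 v10 v01 -> Eqn (x+1) y v10 v20 v11 ->
  Eqn x (y+1) v01 v11 v02 -> Eqn (x+1) (y+1) v11 v21 v12 ->
  0 <= (b-x-1)*(lBB*(x+1)+lBS*y) * (v10 - v20 - v11 + v21) ->
  0 <= lBS*(s-y-1)*(v10 - 2*v11 + v12) ->
  0 <= lBS*(v10 - v11) ->
  0 <= Cc x (y+1) * (v01 - v11 - v02 + v12) ->
  0 <= lBS*(v11 - v21) + lBS*(b-x)*(v01 - 2*v11 + v21) ->
  0 <= (r + Aa x y + Cc x y) * (v00 - v10 - v01 + v11).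
Proof. rewrite /Eqn /Aa /Cc /Ff => *; lra. Qed.

Lemma stepY x y v00 v10 v01 v11 v02 v12 v03 :
  Eqn x y v00 v10 v01 -> Eqn x (y+1) v01 v11 v02 ->
  Eqn x (y+2) v02 v12 v03 ->
  0 <= lBS*(b-x)*(v01 - v11 - v02 + v12) ->
  0 <= Cc x (y+2) * (v01 - 2*v02 + v03) ->
  0 <= Aa x y * (v10 - 2*v11 + v12) ->
  0 <= lSS*(v01 - v02) ->
  0 <= (r + Aa x y + Cc x y) * (v00 - 2*v01 + v02).
Proof. rewrite /Eqn /Aa /Cc /Ff => *; lra. Qed.

Lemma stepZ x y v00 v10 v20 v30 v01 v11 v21 :
  Eqn x y v00 v10 v01 -> Eqn (x+1) y v10 v20 v11 ->
  Eqn (x+2) y v20 v30 v21 ->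
  0 <= Aa (x+2) y * (v10 - 2*v20 + v30) ->
  0 <= lBS*(s-y)*(v10 - v20 - v11 + v21) ->
  0 <= Cc x y * (v01 - 2*v11 + v21) ->
  0 <= lBB*(v10 - v20) ->
  0 <= (r + Aa x y + Cc x y) * (v00 - 2*v10 + v20).
Proof. rewrite /Eqn /Aa /Cc /Ff => *; lra. Qed.
End Abs.

Section Main.
Variables (R : realFieldType) (B S : nat) (r lBB lSS lBS : R) (V : nat -> nat -> R).
Hypotheses (hB : (1 <= B)%N) (hS : (1 <= S)%N) (hr : 0 < r) (hbb : 0 < lBB)
  (hss : 0 < lSS) (hbs : 0 < lBS) (hV : V_rec B S r lBB lSS lBS V).

Notation b := (B%:R : R).
Notation s := (S%:R : R).
Notation A := (Aa lBB lBS b).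
Notation C := (Cc lSS lBS s).
Notation EQ := (Eqn r lBB lSS lBS b s).

Lemma A_ge0 i j : (i <= B)%N -> 0 <= A i%:R j%:R.
Proof.
move=> hi; rewrite /Aa; apply: mulr_ge0; first by rewrite subr_ge0 ler_nat.
by apply: addr_ge0; apply: mulr_ge0 => //; apply: ltW.
Qed.

Lemma C_ge0 i j : (1 <= j <= S)%N -> 0 <= C i%:R j%:R.
Proof.
case/andP=> h1 h2; rewrite /Cc; apply: mulr_ge0; first by rewrite subr_ge0 ler_nat.
apply: addr_ge0; apply: mulr_ge0 => //; try exact: ltW.
by rewrite subr_ge0 (_ : 1 = 1%:R) // ler_nat.
Qed.

Lemma N_gt0 i j : (i <= B)%N -> (1 <= j <= S)%N -> 0 < r + A i%:R j%:R + C i%:R j%:R.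
Proof.
move=> h1 h2; apply: (lt_le_trans hr); rewrite -addrA lerDl.
exact: addr_ge0 (A_ge0 j h1) (C_ge0 i h2).
Qed.

Lemma EqN i j : (i <= B)%N -> (1 <= j <= S)%N -> EQ i%:R j%:R (V i j) (V i.+1 j) (V i j.+1).
Proof.
move=> hi hj; case/andP: (hj) => hj1 hj2.
rewrite /Eqn.
have [ltiB|eiB] := ltnP i B; last first.
  have eB : i = B by apply/eqP; rewrite eqn_leq hi eiB.
  subst i; rewrite hV.1 // /Aa /Ff subrr !mul0r !mulr0 add0r addr0.
  have [ltjS|ejS] := ltnP j S.
    by rewrite hV.1 ?mulr0 // ltjS.
  have -> : j = S by apply/eqP; rewrite eqn_leq hj2 ejS.
  by rewrite /Cc subrr !mul0r.
have := hV.2 i j ltiB hj.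
rewrite (natrB _ (ltnW ltiB)) (natrB _ hj1) (natrB _ hj2) => ->.
set den := (r + _ + _ + _ + _).
have -> : r + A i%:R j%:R + C i%:R j%:R = den by rewrite /den /Aa /Cc; ring.
have hd : den != 0.
  have := N_gt0 hi hj.
  have -> : r + A i%:R j%:R + C i%:R j%:R = den by rewrite /den /Aa /Cc; ring.
  by move=> h; rewrite gt_eqF.
rewrite mulrC divfK //= /Aa /Cc /Ff; ring.
Qed.


Definition Inv i j :=
  0 <= V i j - V i.+1 j /\
  ((j < S)%N -> 0 <= V i j - V i j.+1 /\ 0 <= V i j - V i.+1 j - V i j.+1 + V i.+1 j.+1) /\
  ((j.+1 < S)%N -> 0 <= V i j - 2 * V i j.+1 + V i j.+2) /\
  ((i.+1 < B)%N -> 0 <= V i j - 2 * V i.+1 j + V i.+2 j).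

Lemma A_zero y : A b y = 0. Proof. by rewrite /Aa subrr mul0r. Qed.
Lemma C_zero x : C x s = 0. Proof. by rewrite /Cc subrr mul0r. Qed.

Lemma posN i j T : (i <= B)%N -> (0 < j <= S)%N ->
  0 <= (r + A i%:R j%:R + C i%:R j%:R) * T -> 0 <= T.
Proof. by move=> h1 h2; rewrite pmulr_rge0 // N_gt0. Qed.

Lemma lbs0 : 0 <= lBS. Proof. exact: ltW. Qed.
Lemma lss0 : 0 <= lSS. Proof. exact: ltW. Qed.
Lemma lbb0 : 0 <= lBB. Proof. exact: ltW. Qed.

Lemma sub_nat_ge0 m n : (m <= n)%N -> 0 <= n%:R - m%:R :> R.
Proof. by move=> h; rewrite subr_ge0 ler_nat. Qed.

Lemma rng1 j : (j < S)%N -> (0 < j.+1 <= S)%N.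
Proof. by move=> h; rewrite ltn0Sn h. Qed.

Lemma step i j : (i < B)%N -> (0 < j <= S)%N ->
  ((i.+1 < B)%N -> forall j', (0 < j' <= S)%N -> Inv i.+1 j') ->
  ((j < S)%N -> Inv i j.+1) -> Inv i j.
Proof.
move=> hi hj IHr IHc.
have hj1 : (0 < j)%N by case/andP: hj.
have hjS' : (j <= S)%N by case/andP: hj.
have ei1 : (i.+1)%:R = i%:R + 1 :> R by rewrite -natr1.
have ei2 : (i.+2)%:R = i%:R + 2 :> R by rewrite -[i.+2]addn2 natrD.
have ej1 : (j.+1)%:R = j%:R + 1 :> R by rewrite -natr1.
have ej2 : (j.+2)%:R = j%:R + 2 :> R by rewrite -[j.+2]addn2 natrD.
have E00 := EqN (ltnW hi) hj.
have E10 := EqN hi hj. rewrite ei1 in E10.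
have VB : forall j', (0 < j' <= S)%N -> V B j' = 0 by case: hV.
have hD : 0 <= V i j - V i.+1 j.
  apply: (posN (ltnW hi) hj).
  have p1 : 0 <= A (i.+1)%:R j%:R * (V i.+1 j - V i.+2 j).
    have [lt|ge] := ltnP i.+1 B.
      exact: mulr_ge0 (A_ge0 _ (ltnW lt)) (IHr lt j hj).1.
    have -> : i.+1 = B by apply/eqP; rewrite eqn_leq hi ge.
    by rewrite A_zero mul0r.
  have p2 : 0 <= lBS * (s - j%:R) * (V i.+1 j - V i.+1 j.+1).
    have [ltj|gej] := ltnP j S; last first.
      have -> : j = S by apply/eqP; rewrite eqn_leq hjS' gej.
      by rewrite subrr mulr0 mul0r.
    have [lt|ge] := ltnP i.+1 B.
      exact: mulr_ge0 (mulr_ge0 lbs0 (sub_nat_ge0 hjS')) ((IHr lt j hj).2.1 ltj).1.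
    have -> : i.+1 = B by apply/eqP; rewrite eqn_leq hi ge.
    by rewrite !VB ?rng1 // subrr mulr0.
  have p3 : 0 <= C i%:R j%:R * (V i j.+1 - V i.+1 j.+1).
    have [ltj|gej] := ltnP j S; last first.
      have -> : j = S by apply/eqP; rewrite eqn_leq hjS' gej.
      by rewrite C_zero mul0r.
    exact: mulr_ge0 (C_ge0 _ hj) (IHc ltj).1.
  rewrite ei1 in p1.
  exact: stepD lbs0 E00 E10 p1 p2 p3.
split=> //.
split.
  move=> ltj.
  have hj' := rng1 ltj.
  have E01 := EqN (ltnW hi) hj'. rewrite ej1 in E01.
  have E11 := EqN hi hj'. rewrite ei1 ej1 in E11.
  have Dc := (IHc ltj).1.
  split.
    apply: (posN (ltnW hi) hj).
    have q1 : 0 <= lBS * (b - i%:R) * (V i j.+1 - V i.+1 j.+1).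
      exact: mulr_ge0 (mulr_ge0 lbs0 (sub_nat_ge0 (ltnW hi))) Dc.
    have q2 : 0 <= C i%:R (j.+1)%:R * (V i j.+1 - V i j.+2).
      have [ltj2|gej2] := ltnP j.+1 S; last first.
        have -> : j.+1 = S by apply/eqP; rewrite eqn_leq ltj gej2.
        by rewrite C_zero mul0r.
      exact: mulr_ge0 (C_ge0 _ hj') ((IHc ltj).2.1 ltj2).1.
    have q3 : 0 <= A i%:R j%:R * (V i.+1 j - V i.+1 j.+1).
      have [lt|ge] := ltnP i.+1 B.
        exact: mulr_ge0 (A_ge0 _ (ltnW hi)) ((IHr lt j hj).2.1 ltj).1.
      have -> : i.+1 = B by apply/eqP; rewrite eqn_leq hi ge.
      by rewrite !VB ?rng1 // subrr mulr0.
    rewrite ej1 in q2.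
    exact: stepE E00 E01 q1 q2 q3.
  apply: (posN (ltnW hi) hj).
  have r1 : 0 <= (b - i%:R - 1) * (lBB * (i%:R + 1) + lBS * j%:R) *
                 (V i.+1 j - V i.+2 j - V i.+1 j.+1 + V i.+2 j.+1).
    have [lt|ge] := ltnP i.+1 B; last first.
      have -> : B = i.+1 by apply/eqP; rewrite eqn_leq ge hi.
      by rewrite ei1 (_ : i%:R + 1 - i%:R - 1 = 0 :> R) ?mul0r //; ring.
    apply: mulr_ge0; last exact: ((IHr lt j hj).2.1 ltj).2.
    apply: mulr_ge0; first by rewrite -addrA -opprD -ei1; exact: sub_nat_ge0.
    apply: addr_ge0; apply: mulr_ge0; rewrite ?lbb0 ?lbs0 ?ler0n //.
    by rewrite -ei1 ler0n.
  have r2 : 0 <= lBS * (s - j%:R - 1) * (V i.+1 j - 2 * V i.+1 j.+1 + V i.+1 j.+2).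
    have [ltj2|gej2] := ltnP j.+1 S; last first.
      have -> : S = j.+1 by apply/eqP; rewrite eqn_leq gej2 ltj.
      by rewrite ej1 (_ : j%:R + 1 - j%:R - 1 = 0 :> R) ?mulr0 ?mul0r //; ring.
    apply: mulr_ge0.
      apply: mulr_ge0 lbs0 _; rewrite -addrA -opprD -ej1; exact: sub_nat_ge0.
    have [lt|ge] := ltnP i.+1 B.
      exact: (IHr lt j hj).2.2.1 ltj2.
    have -> : i.+1 = B by apply/eqP; rewrite eqn_leq hi ge.
    by rewrite (VB j) // (VB j.+1) ?rng1 // (VB j.+2) ?rng1 // mulr0 subrr addr0.
  have r3 : 0 <= lBS * (V i.+1 j - V i.+1 j.+1).
    have [lt|ge] := ltnP i.+1 B.
      exact: mulr_ge0 lbs0 ((IHr lt j hj).2.1 ltj).1.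
    have -> : i.+1 = B by apply/eqP; rewrite eqn_leq hi ge.
    by rewrite !VB ?rng1 // subrr mulr0.
  have r4 : 0 <= C i%:R (j.+1)%:R * (V i j.+1 - V i.+1 j.+1 - V i j.+2 + V i.+1 j.+2).
    have [ltj2|gej2] := ltnP j.+1 S; last first.
      have -> : j.+1 = S by apply/eqP; rewrite eqn_leq ltj gej2.
      by rewrite C_zero mul0r.
    exact: mulr_ge0 (C_ge0 _ hj') ((IHc ltj).2.1 ltj2).2.
  have r5 : 0 <= lBS * (V i.+1 j.+1 - V i.+2 j.+1)
              + lBS * (b - i%:R) * (V i j.+1 - 2 * V i.+1 j.+1 + V i.+2 j.+1).
    have [lt|ge] := ltnP i.+1 B.
      apply: addr_ge0.
        exact: mulr_ge0 lbs0 (IHr lt j.+1 hj').1.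
      exact: mulr_ge0 (mulr_ge0 lbs0 (sub_nat_ge0 (ltnW hi))) ((IHc ltj).2.2.2 lt).
    have eB : B = i.+1 by apply/eqP; rewrite eqn_leq ge hi.
    have v0 : V i.+1 j.+1 = 0 by rewrite -eB VB.
    rewrite v0 eB ei1 (_ : _ + _ = lBS * (V i j.+1 - 0)); last by ring.
    by move: Dc; rewrite v0 !subr0 => Dc'; exact: mulr_ge0 lbs0 Dc'.
  rewrite ej1 in r4.
  exact: stepX E00 E10 E01 E11 r1 r2 r3 r4 r5.
split.
  move=> ltj2.
  have ltj : (j < S)%N by exact: ltnW.
  have hj' := rng1 ltj.
  have hj'' := rng1 ltj2.
  have E01 := EqN (ltnW hi) hj'. rewrite ej1 in E01.
  have E02 := EqN (ltnW hi) hj''. rewrite ej2 in E02.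
  apply: (posN (ltnW hi) hj).
  have s1 : 0 <= lBS * (b - i%:R) * (V i j.+1 - V i.+1 j.+1 - V i j.+2 + V i.+1 j.+2).
    exact: mulr_ge0 (mulr_ge0 lbs0 (sub_nat_ge0 (ltnW hi))) ((IHc ltj).2.1 ltj2).2.
  have s2 : 0 <= C i%:R (j.+2)%:R * (V i j.+1 - 2 * V i j.+2 + V i j.+3).
    have [ltj3|gej3] := ltnP j.+2 S; last first.
      have -> : j.+2 = S by apply/eqP; rewrite eqn_leq ltj2 gej3.
      by rewrite C_zero mul0r.
    exact: mulr_ge0 (C_ge0 _ hj'') ((IHc ltj).2.2.1 ltj3).
  have s3 : 0 <= A i%:R j%:R * (V i.+1 j - 2 * V i.+1 j.+1 + V i.+1 j.+2).
    have [lt|ge] := ltnP i.+1 B.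
      exact: mulr_ge0 (A_ge0 _ (ltnW hi)) ((IHr lt j hj).2.2.1 ltj2).
    have -> : i.+1 = B by apply/eqP; rewrite eqn_leq hi ge.
    by rewrite (VB j) // (VB j.+1) // (VB j.+2) // mulr0 subrr addr0 mulr0.
  have s4 : 0 <= lSS * (V i j.+1 - V i j.+2).
    exact: mulr_ge0 lss0 ((IHc ltj).2.1 ltj2).1.
  rewrite ej2 in s2.
  exact: stepY E00 E01 E02 s1 s2 s3 s4.
move=> lt.
have E20 := EqN lt hj. rewrite ei2 in E20.
apply: (posN (ltnW hi) hj).
have t1 : 0 <= A (i.+2)%:R j%:R * (V i.+1 j - 2 * V i.+2 j + V i.+3 j).
  have [lt2|ge2] := ltnP i.+2 B.
    exact: mulr_ge0 (A_ge0 _ (ltnW lt2)) ((IHr lt j hj).2.2.2 lt2).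
  have -> : i.+2 = B by apply/eqP; rewrite eqn_leq lt ge2.
  by rewrite A_zero mul0r.
have t2 : 0 <= lBS * (s - j%:R) * (V i.+1 j - V i.+2 j - V i.+1 j.+1 + V i.+2 j.+1).
  have [ltj|gej] := ltnP j S; last first.
    have -> : j = S by apply/eqP; rewrite eqn_leq hjS' gej.
    by rewrite subrr mulr0 mul0r.
  exact: mulr_ge0 (mulr_ge0 lbs0 (sub_nat_ge0 hjS')) ((IHr lt j hj).2.1 ltj).2.
have t3 : 0 <= C i%:R j%:R * (V i j.+1 - 2 * V i.+1 j.+1 + V i.+2 j.+1).
  have [ltj|gej] := ltnP j S; last first.
    have -> : j = S by apply/eqP; rewrite eqn_leq hjS' gej.
    by rewrite C_zero mul0r.
  exact: mulr_ge0 (C_ge0 _ hj) ((IHc ltj).2.2.2 lt).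
have t4 : 0 <= lBB * (V i.+1 j - V i.+2 j).
  exact: mulr_ge0 lbb0 (IHr lt j hj).1.
rewrite ei2 in t1.
exact: stepZ E00 E10 E20 t1 t2 t3 t4.
Qed.


Lemma row_ok i : (i < B)%N ->
  ((i.+1 < B)%N -> forall j', (0 < j' <= S)%N -> Inv i.+1 j') ->
  forall j, (0 < j <= S)%N -> Inv i j.
Proof.
move=> hi IHr.
suff H : forall m j, (S - j = m)%N -> (0 < j <= S)%N -> Inv i j.
  by move=> j; exact: H _ j erefl.
elim=> [|m IHm] j hm hj; apply: step => // ltj.
  exfalso; lia.
apply: IHm; [lia | exact: rng1].
Qed.

Lemma all_inv i : (i < B)%N -> forall j, (0 < j <= S)%N -> Inv i j.
Proof.
suff H : forall k i, (B - i.+1 = k)%N -> (i < B)%N -> forall j, (0 < j <= S)%N -> Inv i j.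
  by move=> hi; exact: H _ i erefl hi.
elim=> [|k IH] i' hk hi'; apply: row_ok => // lt.
  exfalso; lia.
apply: IH => //; lia.
Qed.

Lemma D_col i j : (i < B)%N -> (0 < j <= S)%N ->
  V i j - V i.+1 j <= V i 1%N - V i.+1 1%N.
Proof.
move=> hi; elim: j => [//|j IH] hj.
have [j0|jpos] := posnP j; first by subst j; rewrite lexx.
have hjS : (j < S)%N by case/andP: hj.
have hj' : (0 < j <= S)%N by rewrite jpos ltnW.
apply: le_trans (IH hj').
have := ((all_inv hi hj').2.1 hjS).2.
lra.
Qed.

Lemma D_row i : (i < B)%N -> V i 1%N - V i.+1 1%N <= V 0%N 1%N - V 1%N 1%N.
Proof.
elim: i => [//|i IH] hi.
apply: le_trans (IH (ltnW hi)).
have h1 : (0 < 1 <= S)%N by rewrite hS.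
have := (all_inv (ltnW hi) h1).2.2.2 hi.
lra.
Qed.

End Main.

Unset Implicit Arguments.
Theorem mainTheorem3 (R : realFieldType) (B S : nat) (r lBB lSS lBS : R)
    (V : nat -> nat -> R) :
  (1 <= B)%N -> (1 <= S)%N ->
  0 < r -> 0 < lBB -> 0 < lSS -> 0 < lBS ->
  V_rec B S r lBB lSS lBS V ->
  forall kb ks, (kb < B)%N -> (1 <= ks <= S)%N ->
    V kb ks - V kb.+1 ks <= V 0%N 1%N - V 1%N 1%N.
Proof.
move=> hB hS hr hbb hss hbs hV kb ks hk hks.
apply: le_trans (D_col hB hS hr hbb hss hbs hV hk hks) _.
exact: (@D_row R B S r lBB lSS lBS V hB hS hr hbb hss hbs hV kb hk).
Qed.
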